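(* Let $\mathcal L$ be a finite atomic lattice with set of atoms $\mathfrak A(\mathcal L)$, and let $\mathcal G$ be a building set in $\mathcal L$. Let $\mathcal I\subseteq \mathbb Z[\{x_G\}_{G\in\mathcal G}]$ be the ideal generated by the monomials $\prod_{i=1}^t x_{G_i}$ for all subsets $\{G_1,\dots,G_t\}\subseteq\mathcal G$ that are not nested, together with the linear forms $\sum_{G\in\mathcal G,\,G\geq H} x_G$ for all atoms $H\in\mathfrak A(\mathcal L)$. Then $\mathcal I$ is also generated by the following polynomials: (a) $h_{\mathcal S}=\prod_{G\in\mathcal S}x_G$ for every subset $\mathcal S\subseteq\mathcal G$ that is not nested; (b) $g_{\mathcal H,B}=\prod_{i=1}^k x_{A_i}\,\Big(\sum_{G\in\mathcal G,\,G\geq B}x_G\Big)^{d}$, where $\mathcal H$ is a nested set, $A_1,\dots,A_k$ are the maximal elements of $\mathcal H$, $B\in\mathcal G$ with $B>A:=\bigvee_{i=1}^kA_i$ (the join of the empty set being $\hat 0$), and $d=d(A,B)$.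
   Context: A lattice is a finite poset in which every subset has a join $\vee$ and a meet $\wedge$; $\hat 0$ is its least element. It is atomic if every element is a join of atoms. For $X\le Y$ write $[X,Y]=\{Z: X\le Z\le Y\}$ and for $\mathcal G\subseteq\mathcal L$ write $\mathcal G_{\le X}=\{G\in\mathcal G: G\le X\}$. A subset $\mathcal G\subseteq\mathcal L\setminus\{\hat 0\}$ is a building set if for every $X\in\mathcal L\setminus\{\hat0\}$, with $\{G_1,\dots,G_k\}$ the set of maximal elements of $\mathcal G_{\le X}$, there is a poset isomorphism $\varphi_X:\prod_{i=1}^k[\hat0,G_i]\to[\hat0,X]$ with $\varphi_X(\hat0,\dots,G_i,\dots,\hat0)=G_i$ for all $i$. A subset $\mathcal S\subseteq\mathcal G$ is nested if for every set of pairwise incomparable elements $G_1,\dots,G_t\in\mathcal S$ with $t\ge2$, the join $G_1\vee\dots\vee G_t$ does not belong to $\mathcal G$. For $X\le Y$ in an atomic lattice, $d(X,Y)$ is the minimal number $d$ of atoms $H_1,\dots,H_d$ such that $Y=X\vee\bigvee_{i=1}^dH_i$. *)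

(* Defs.v *)
From HB Require Import structures.
From mathcomp Require Import all_boot all_order all_algebra.
From mathcomp Require Import mpoly.

Set Implicit Arguments.
Unset Strict Implicit.
Unset Printing Implicit Defensive.

Import Order.Theory GRing.Theory.

Section LatticeDefs.
Local Open Scope order_scope.

Context {disp : Order.disp_t} {L : finTBLatticeType disp}.

Definition atoms : {set L} :=
  [set a : L | (\bot < a) && [forall z : L, ~~ ((\bot < z) && (z < a))]].

Definition atomic : Prop :=
  forall X : L, exists S : {set L}, S \subset atoms /\ X = \join_(a in S) a.

Definition maxelts (S : {set L}) : {set L} :=
  [set A in S | [forall Z in S, (A <= Z) ==> (Z == A)]].

(* the product poset prod_{G in M} [\bot, G], encoded as finite functions
   f : L -> L with f G in [\bot, G] for G in M and f G = \bot otherwise,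
   ordered componentwise *)
Definition prodint (M : {set L}) : {set {ffun L -> L}} :=
  [set f : {ffun L -> L} |
     [forall G : L, if G \in M then f G <= G else f G == \bot]].

Definition unitvec (G : L) : {ffun L -> L} :=
  [ffun H : L => if H == G then G else \bot].

Definition building_set (Gs : {set L}) : Prop :=
  \bot \notin Gs /\
  forall X : L, X != \bot ->
    let M := maxelts [set G in Gs | G <= X] in
    exists phi : {ffun L -> L} -> L,
      [/\ {in prodint M &, forall f g,
              (phi f <= phi g) = [forall G : L, f G <= g G]},
          [set phi f | f in prodint M] = [set Z : L | Z <= X]
        & forall G, G \in M -> phi (unitvec G) = G].

Definition nested (Gs S : {set L}) : Prop :=
  S \subset Gs /\
  forall T : {set L}, T \subset S -> 1 < #|T|
    -> {in T &, forall G H, G != H -> ~~ ((G <= H) || (H <= G))}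
    -> (\join_(G in T) G) \notin Gs.

(* d(X,Y): the minimal number of atoms H_1..H_d with Y = X v H_1 v ... v H_d
   (the big-min default #|L| is never attained below when X <= Y in an
   atomic lattice, since then a witness set of atoms exists) *)
Definition dist (X Y : L) : nat :=
  \big[minn/#|L|]_(S : {set L} | (S \subset atoms) &&
                                 (Y == X `|` \join_(a in S) a)) #|S|.

End LatticeDefs.

Section PolyDefs.
Local Open Scope ring_scope.

Context {disp : Order.disp_t} {L : finTBLatticeType disp} (Gs : {set L}).

(* the polynomial ring Z[{x_G}_{G in Gs}]: variables indexed by 'I_#|Gs|,
   the i-th variable corresponding to the i-th element of enum Gs *)
Definition PR := {mpoly int[#|Gs|]}.

Definition xv (G : L) : PR :=
  if [pick i : 'I_#|Gs| | enum_val i == G] is Some i then 'X_i else 0.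

Definition in_ideal (S : PR -> Prop) (p : PR) : Prop :=
  exists s : seq (PR * PR),
    (forall c, c \in s -> S c.2) /\ p = \sum_(c <- s) c.1 * c.2.

Definition monom (S : {set L}) : PR := \prod_(G in S) xv G.

Definition upsum (H : L) : PR :=
  \sum_(G in Gs | (H <= G)%O) xv G.

Definition gens_orig (p : PR) : Prop :=
  (exists S : {set L}, S \subset Gs /\ ~ nested Gs S /\ p = monom S) \/
  (exists H : L, H \in atoms /\ p = upsum H).

Definition gens_new (p : PR) : Prop :=
  (exists S : {set L}, S \subset Gs /\ ~ nested Gs S /\ p = monom S) \/
  (exists (Hs : {set L}) (B : L),
     nested Gs Hs /\ B \in Gs /\
     let A := (\join_(Ai in maxelts Hs) Ai)%O in
     (A < B)%O /\ p = monom (maxelts Hs) * upsum B ^+ dist A B).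

End PolyDefs.

(* Main.v *)
Require Import Defs.
From HB Require Import structures.
From mathcomp Require Import all_boot all_order all_algebra.
From mathcomp Require Import mpoly.
From Stdlib Require Import Classical.
Set Implicit Arguments.
Unset Strict Implicit.
Unset Printing Implicit Defensive.
Import Order.Theory GRing.Theory.
Section Lat.
Local Open Scope order_scope.
Context {disp : Order.disp_t} {L : finTBLatticeType disp}.
Implicit Types (S T : {set L}) (x y : L).

Lemma exists_max S x : x \in S -> exists2 y, y \in maxelts S & x <= y.
Proof.
move=> xS.
pose C := [set z in S | x <= z].
have xC : x \in C by rewrite inE xS lexx.
case: (arg_maxnP (fun y => #|[set w : L | w <= y]|) xC) => y.
move=> H1 Hmax; have : y \in C := H1.
rewrite /C inE => /andP [yS xy].
exists y => //.
rewrite inE yS; apply/forallP => Z; apply/implyP => ZS; apply/implyP => yZ.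
have ZC : Z \in C by rewrite /C inE ZS (le_trans xy yZ).
have := Hmax Z ZC; rewrite /geq.
rewrite eq_sym eq_le yZ /=; apply: contraLR; rewrite -ltnNge => ZNy.
apply: proper_card; apply/properP; split.
  by apply/subsetP => w; rewrite !inE => wy; apply: le_trans wy yZ.
exists Z; first by rewrite inE.
by rewrite inE.
Qed.

Lemma maxelts_sub S : maxelts S \subset S.
Proof. by apply/subsetP => x; rewrite inE => /andP []. Qed.

Lemma join_maxelts S : \join_(x in maxelts S) x = \join_(x in S) x.
Proof.
apply/eqP; rewrite eq_le; apply/andP; split.
  exact: le_joins (maxelts_sub S).
apply/joinsP => x xS; have [y ym xy] := exists_max xS.
exact: le_trans xy (joins_sup _ ym).
Qed.

Lemma maxelts_incomp S x y : x \in maxelts S -> y \in maxelts S -> x != y ->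
  ~~ ((x <= y) || (y <= x)).
Proof.
rewrite !inE => /andP [xS /forallP hx] /andP [yS /forallP hy] nxy.
apply/negP => /orP [xy|yx].
  by move: (hx y); rewrite yS xy /= eq_sym (negbTE nxy).
by move: (hy x); rewrite xS yx /= (negbTE nxy).
Qed.


Lemma unitvec_prodint (M : {set L}) (G : L) : G \in M -> unitvec G \in prodint M.
Proof.
move=> GM; rewrite inE; apply/forallP => H; rewrite ffunE.
case: ifP => HM; first by case: (eqVneq H G) => [->|_]; rewrite ?lexx ?le0x.
case: (eqVneq H G) => [eHG|_]; last by rewrite eqxx.
by rewrite eHG GM in HM.
Qed.

Lemma bs_join (Gs : {set L}) G1 G2 h : building_set Gs ->
  G1 \in Gs -> G2 \in Gs -> h != \bot -> h <= G1 -> h <= G2 ->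
  G1 `|` G2 \in Gs.
Proof.
move=> [_ bs] G1s G2s hn0 hG1 hG2.
set X := G1 `|` G2.
have Xn0 : X != \bot.
  apply: contraNneq hn0 => X0; rewrite -lex0 -X0; exact: lexUl.
have [phi [phile phiim phiu]] := bs X Xn0.
set M := maxelts _ in phile phiim phiu.
have G1S : G1 \in [set G in Gs | G <= X] by rewrite inE G1s leUl.
have G2S : G2 \in [set G in Gs | G <= X] by rewrite inE G2s leUr.
have [F1 F1M G1F1] := exists_max G1S.
have [F2 F2M G2F2] := exists_max G2S.
have FS : forall F, F \in M -> F \in Gs /\ F <= X.
  by move=> F /(subsetP (maxelts_sub _)); rewrite inE => /andP [].
case: (eqVneq F1 F2) => [eF|nF].
  have [F1s F1X] := FS _ F1M.
  have XF1 : X <= F1 by rewrite leUx G1F1 eF G2F2.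
  by have -> : X = F1 by apply/eqP; rewrite eq_le XF1 F1X.
exfalso.
have inim : forall Z, Z <= X -> exists2 f, f \in prodint M & Z = phi f.
  move=> Z ZX; have : Z \in [set Z : L | Z <= X] by rewrite inE.
  by rewrite -phiim => /imsetP.
have [k kP ek] := inim h (le_trans hG1 (leUl _ _)).
have [f1 f1P ef1] := inim G1 (leUl _ _).
have [f2 f2P ef2] := inim G2 (leUr _ _).
have [z zP ez] := inim \bot (le0x _).
have u1 := unitvec_prodint F1M; have u2 := unitvec_prodint F2M.
have k1 : forall G, k G <= unitvec F1 G.
  move=> G; have : phi k <= phi (unitvec F1).
    by rewrite -ek phiu // (le_trans hG1) // -ef1.
  rewrite phile // => /forallP/(_ G) kf1; exact: kf1.
have k2 : forall G, k G <= unitvec F2 G.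
  move=> G; have : phi k <= phi (unitvec F2).
    by rewrite -ek phiu // (le_trans hG2) // -ef2.
  rewrite phile // => /forallP/(_ G) kf1; exact: kf1.
have kz : phi k <= phi z.
  rewrite phile //; apply/forallP => G.
  have := k1 G; have := k2 G; rewrite !ffunE.
  case: (eqVneq G F1) => [->|_]; last by rewrite lex0 => _ /eqP ->; rewrite le0x.
  by rewrite (negbTE nF) lex0 => /eqP ->; rewrite le0x.
by move: kz; rewrite -ek -ez lex0 (negbTE hn0).
Qed.

Lemma atom_in_bs (Gs : {set L}) H : building_set Gs -> H \in atoms -> H \in Gs.
Proof.
move=> [b0 bs]; rewrite inE => /andP [bH /forallP noz].
apply/negP => HnG.
have Hn0 : H != \bot by rewrite lt_def in bH; case/andP: bH.
have [phi [_ phiim _]] := bs H Hn0.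
set M := maxelts _ in phiim.
have M0 : M = set0 :> {set L}.
  apply/setP => G; rewrite in_set0.
  apply/negP => /(subsetP (maxelts_sub _)); rewrite inE => /andP [Gs' GH].
  case: (eqVneq G H) => [eGH|nGH]; first by apply: HnG; rewrite -eGH.
  case: (eqVneq G \bot) => [G0|Gn0]; first by move: b0; rewrite -G0 Gs'.
  have := noz G; rewrite (lt_def \bot G) Gn0 le0x /= lt_neqAle nGH GH.
  by [].
have inim : forall Z, Z <= H -> exists2 f, f \in prodint M & Z = phi f.
  move=> Z ZX; have : Z \in [set Z : L | Z <= H] by rewrite inE.
  by rewrite -phiim => /imsetP.
have [f fP ef] := inim H (lexx _).
have [g gP eg] := inim \bot (le0x _).
have fg : f = g.
  apply/ffunP => G; move: fP gP; rewrite !inE M0 => /forallP/(_ G) + /forallP/(_ G).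
  by rewrite inE => /eqP -> /eqP ->.
by move: Hn0; rewrite ef fg -eg eqxx.
Qed.

Lemma bigmin_le (I : finType) (P : pred I) (F : I -> nat) m j : P j ->
  (\big[minn/m]_(i | P i) F i <= F j)%N.
Proof.
move=> Pj; have : j \in index_enum I by rewrite mem_index_enum.
elim: (index_enum I) => [|a r IH]; first by [].
rewrite inE big_cons => /orP [/eqP <-|jr]; first by rewrite Pj geq_minl.
case: (P a); last exact: IH.
by rewrite geq_min IH ?orbT.
Qed.

Lemma dist_le X Y (S : {set L}) : S \subset atoms -> Y = X `|` \join_(a in S) a ->
  (dist X Y <= #|S|)%N.
Proof.
move=> Sa eY; rewrite /dist; apply: (bigmin_le (fun S : {set L} => #|S|)).
by rewrite Sa eY eqxx.
Qed.

Lemma dist_witness X Y : atomic (L := L) -> X <= Y -> exists S : {set L},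
  [/\ S \subset atoms, Y = X `|` \join_(a in S) a & #|S| = dist X Y].
Proof.
move=> hat XY.
have [S0 [S0a eS0]] := hat Y.
pose P := fun S : {set L} => (S \subset atoms) && (Y == X `|` \join_(a in S) a).
have PS0 : P S0 by rewrite /P S0a -eS0 /= (join_r XY) eqxx.
case: (arg_minnP (fun S : {set L} => #|S|) PS0) => Sm PSm Hmin.
move: (PSm) => /andP [Sma /eqP eSm].
exists Sm; split => //.
apply/eqP; rewrite eqn_leq dist_le // andbT.
rewrite /dist; apply: (big_ind (fun v => #|Sm| <= v)%N).
- by rewrite max_card.
- by move=> a b ha hb; rewrite leq_min ha hb.
- exact: Hmin.
Qed.

Lemma dist_eq0 (X Y : L) : atomic (L := L) -> X <= Y -> dist X Y = 0%N -> X = Y.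
Proof.
move=> hat XY d0; have [S [_ eY cS]] := dist_witness hat XY.
move: cS; rewrite d0 => /eqP; rewrite cards_eq0 => /eqP S0.
by rewrite eY S0 big_set0 joinx0.
Qed.
End Lat.
Section Ideal.
Local Open Scope ring_scope.
Context {disp : Order.disp_t} {L : finTBLatticeType disp} (Gs : {set L}).
Implicit Types (S : PR Gs -> Prop) (p q : PR Gs).

Lemma pI0 S : in_ideal S 0.
Proof. by exists [::]; rewrite big_nil. Qed.

Lemma pID S p q : in_ideal S p -> in_ideal S q -> in_ideal S (p + q).
Proof.
move=> [s1 [h1 ->]] [s2 [h2 ->]]; exists (s1 ++ s2); split; last by rewrite big_cat.
by move=> c; rewrite mem_cat => /orP [/h1|/h2].
Qed.

Lemma pIMl S p q : in_ideal S p -> in_ideal S (q * p).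
Proof.
move=> [s [h ->]]; exists [seq (q * c.1, c.2) | c <- s]; split.
  by move=> c /mapP [c' /h hc' ->].
by rewrite big_map mulr_sumr; apply: eq_bigr => c _; rewrite mulrA.
Qed.

Lemma pIMr S p q : in_ideal S p -> in_ideal S (p * q).
Proof. by rewrite mulrC; apply: pIMl. Qed.

Lemma pIN S p : in_ideal S p -> in_ideal S (- p).
Proof. by move=> h; rewrite -mulN1r; apply: pIMl. Qed.

Lemma pIB S p q : in_ideal S p -> in_ideal S q -> in_ideal S (p - q).
Proof. by move=> hp hq; apply: pID => //; apply: pIN. Qed.

Lemma pIgen S p : S p -> in_ideal S p.
Proof.
move=> h; exists [:: (1, p)]; split; first by move=> c; rewrite inE => /eqP ->.
by rewrite big_seq1 mul1r.
Qed.

Lemma pIsum S (I : finType) (P : pred I) (F : I -> PR Gs) :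
  (forall i, P i -> in_ideal S (F i)) -> in_ideal S (\sum_(i | P i) F i).
Proof.
move=> h; apply: (big_ind (in_ideal S)); [exact: pI0 | exact: pID | exact: h].
Qed.

Lemma pItrans S1 S2 p : (forall q, S1 q -> in_ideal S2 q) ->
  in_ideal S1 p -> in_ideal S2 p.
Proof.
move=> h [s [hs ->]]; rewrite big_seq.
apply: (big_ind (in_ideal S2)); [exact: pI0 | exact: pID |].
by move=> c /hs /h; apply: pIMl.
Qed.

Lemma monom_sub (A B : {set L}) : B \subset A -> monom Gs A = monom Gs B * monom Gs (A :\: B).
Proof. by move=> BA; rewrite /monom (big_setID B) /= (setIidPr BA). Qed.

Lemma monomU1 (A : {set L}) G : G \notin A -> monom Gs (G |: A) = xv Gs G * monom Gs A.
Proof. by move=> GA; rewrite /monom big_setU1. Qed.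

Lemma monom2 G H : G != H -> monom Gs [set G; H] = xv Gs G * xv Gs H.
Proof. by move=> nGH; rewrite monomU1 ?inE // /monom big_set1. Qed.

End Ideal.
Section Main.
Local Open Scope ring_scope.
Context {disp : Order.disp_t} {L : finTBLatticeType disp} (Gs : {set L}).
Hypothesis hat : atomic (L := L).
Hypothesis hbs : building_set Gs.
Local Notation I := (in_ideal (@gens_orig _ _ Gs)).

Lemma upsum_split (H1 B : L) : (H1 <= B)%O ->
  upsum Gs H1 = upsum Gs B + \sum_(G in Gs | (H1 <= G)%O && ~~ (B <= G)%O) xv Gs G.
Proof.
move=> HB; rewrite /upsum (bigID (fun G => (B <= G)%O)) /=; congr (_ + _).
  apply: eq_bigl => G; rewrite -andbA; congr (_ && _).
  by case BG: (B <= G)%O; rewrite ?andbF ?andbT // (le_trans HB BG).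
by apply: eq_bigl => G; rewrite andbA.
Qed.

Lemma upsum_diff (B G : L) :
  upsum Gs B - upsum Gs (B `|` G)%O =
  \sum_(G' in Gs | (B <= G')%O && ~~ (G <= G')%O) xv Gs G'.
Proof.
rewrite {1}/upsum (bigID (fun G' => (G <= G')%O)) /= addrAC.
rewrite [X in X - _ + _](_ : _ = upsum Gs (B `|` G)%O) ?subrr ?add0r //.
  by apply: eq_bigl => G'; rewrite andbA.
by apply: eq_bigl => G'; rewrite leUx andbA.
Qed.

Lemma nonnested_I (S : {set L}) : S \subset Gs -> ~ nested Gs S -> I (monom Gs S).
Proof. by move=> SG nS; apply: pIgen; left; exists S. Qed.

Lemma atom_I (H : L) : H \in atoms -> I (upsum Gs H).
Proof. by move=> Ha; apply: pIgen; right; exists H. Qed.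

Lemma atom_ne0 (H : L) : H \in atoms -> H != \bot%O.
Proof. by rewrite inE => /andP [+ _]; rewrite lt_def => /andP []. Qed.

Lemma join2 (G H : L) : G != H -> (\join_(i in [set G; H]) i)%O = (G `|` H)%O.
Proof. by move=> nGH; rewrite big_setU1 ?inE //= big_set1. Qed.

Lemma pair_I (G G' h : L) : G \in Gs -> G' \in Gs -> h != \bot%O ->
  (h <= G)%O -> (h <= G')%O -> ~~ ((G <= G')%O || (G' <= G)%O) ->
  I (xv Gs G * xv Gs G').
Proof.
move=> Gs1 Gs2 hn0 hG hG' inc.
have nGG : G != G' by apply: contraNneq inc => ->; rewrite lexx.
rewrite -monom2 //; apply: nonnested_I.
  by apply/subsetP => x; rewrite !inE => /orP [] /eqP ->.
move=> [_ hn].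
suff : (\join_(i in [set G; G']) i)%O \notin Gs.
  by rewrite join2 // (bs_join hbs Gs1 Gs2 hn0 hG hG').
apply: hn; [exact: subxx | by rewrite cards2 nGG |].
move=> x y; rewrite !inE => /orP [] /eqP -> /orP [] /eqP ->; rewrite ?eqxx //.
by rewrite orbC.
Qed.


Lemma le_join_in (S : {set L}) (x : L) : x \in S -> (x <= \join_(a in S) a)%O.
Proof. by move=> xS; apply: (@joins_sup _ _ _ x (mem S) id xS). Qed.

Lemma join_rearr (A H1 J G : L) : (H1 <= G)%O ->
  ((A `|` (H1 `|` J)) `|` G = (A `|` G) `|` J)%O.
Proof. by move=> h; rewrite -[in RHS](join_r h) !joinA joinAC. Qed.

Lemma claim n : forall (Hs : {set L}) (B : L), nested Gs Hs -> B \in Gs ->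
  ((\join_(Ai in maxelts Hs) Ai) < B)%O ->
  (dist (\join_(Ai in maxelts Hs) Ai)%O B <= n)%N ->
  I (monom Gs (maxelts Hs) * upsum Gs B ^+ dist (\join_(Ai in maxelts Hs) Ai)%O B).
Proof.
elim: n => [|n IH] Hs B nH Bs.
  set A := (\join_(Ai in _) Ai)%O => AB; rewrite leqn0 => /eqP d0.
  by move: (AB); rewrite (dist_eq0 hat (ltW AB) d0) ltxx.
set A := (\join_(Ai in _) Ai)%O => AB dn.
have AleB := ltW AB.
have [S [Sa eB cS]] := dist_witness hat AleB.
set d := dist A B in cS dn *.
case Ed: d => [|d'].
  by move: AB; rewrite (dist_eq0 hat AleB Ed) ltxx.
move: dn; rewrite Ed ltnS => dn.
have [H1 H1S] : exists H1, H1 \in S by apply/set0Pn; rewrite -card_gt0 cS Ed.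
have H1a := subsetP Sa _ H1S.
have H1n0 := atom_ne0 H1a.
have H1B : (H1 <= B)%O by rewrite eB lexUr // le_join_in.
set R := \sum_(G in Gs | (H1 <= G)%O && ~~ (B <= G)%O) xv Gs G.
have eu : upsum Gs B = upsum Gs H1 - R by rewrite (upsum_split H1B) addrK.
rewrite exprSr {2}eu !mulrBr.
apply: pIB.
  by rewrite mulrA; apply: pIMl; exact: atom_I.
rewrite /R !mulr_sumr; apply: pIsum => G /andP [Gs' /andP [H1G nBG]].
set B' := (B `|` G)%O.
have B's : B' \in Gs := bs_join hbs Bs Gs' H1n0 H1B H1G.
have step1 : I (xv Gs G * (upsum Gs B ^+ d' - upsum Gs B' ^+ d')).
  rewrite subrXX mulrA. apply: pIMr; rewrite upsum_diff mulr_sumr.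
  apply: pIsum => G' /andP [G's /andP [BG' nGG']].
  apply: (pair_I Gs' G's H1n0 H1G (le_trans H1B BG')).
  rewrite negb_or nGG' /=; apply: contra nBG => G'G; exact: le_trans BG' G'G.
suff step2 : I (monom Gs (maxelts Hs) * xv Gs G * upsum Gs B' ^+ d').
  rewrite (mulrC (upsum Gs B ^+ d')) mulrA.
  rewrite -(subrK (upsum Gs B' ^+ d') (upsum Gs B ^+ d')) mulrDr.
  by apply: pID => //; rewrite -mulrA; apply: pIMl.
set A' := (A `|` G)%O.
have eB' : B' = (A' `|` \join_(a in S :\ H1) a)%O.
  by rewrite /B' eB (big_setD1 H1 H1S) /= join_rearr.
have cS' : #|S :\ H1| = d' by move: cS; rewrite (cardsD1 H1) H1S Ed add1n => -[].
have hd' : (dist A' B' <= d')%N.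
  rewrite -cS'; apply: dist_le eB'; apply: subset_trans Sa; apply: subsetDl.
have GnA : ~~ (G <= A)%O.
  apply/negP => GA.
  have eA' : A' = A := join_l GA.
  have eB'' : B' = B := join_l (le_trans GA AleB).
  have : (d <= d')%N by rewrite /d -eA' -eB''.
  by rewrite Ed ltnn.
have GnM : G \notin maxelts Hs.
  by apply: contra GnA => GM; apply: le_join_in.
set H' := G |: maxelts Hs.
have H'G : H' \subset Gs.
  apply/subsetP => x; rewrite in_setU1 => /orP [/eqP -> //|xm].
  by apply: (subsetP nH.1); apply: (subsetP (maxelts_sub _)).
have eMon : monom Gs (maxelts Hs) * xv Gs G = monom Gs H' by rewrite monomU1 // mulrC.
rewrite eMon.
case: (classic (nested Gs H')) => nH'; last by apply: pIMr; apply: nonnested_I.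
set M' := maxelts H'.
have GM' : G \in M'.
  rewrite inE setU11 /=; apply/forallP => Z; apply/implyP; rewrite in_setU1.
  case/orP => [/eqP ->|ZM]; apply/implyP => GZ; first by rewrite eqxx.
  by exfalso; move/negP: GnA; apply; apply: le_trans GZ _; apply: le_join_in.
have eA'' : (\join_(x in M') x)%O = A'.
  by rewrite join_maxelts /H' joins_setU big_set1 joinC.
have A'B' : (A' < B')%O.
  rewrite lt_neqAle.
  have -> : (A' <= B')%O.
    by rewrite /A' /B' leUx leUr andbT lexUl.
  rewrite andbT; apply/negP => /eqP eAB.
  case: (ltnP 1 #|M'|) => cM.
    have := nH'.2 M' (maxelts_sub _) cM (fun x y hx hy => maxelts_incomp hx hy).
    by rewrite eA'' eAB B's.
  have eM : (\join_(x in M') x)%O = G.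
    apply/eqP; rewrite eq_le le_join_in // andbT; apply/joinsP => x xM.
    case: (eqVneq x G) => [->|nxG]; first exact: lexx.
    exfalso; have : (#|[set x; G]| <= #|M'|)%N.
      by apply: subset_leq_card; apply/subsetP => y; rewrite in_set2 => /orP [] /eqP ->.
    by rewrite cards2 nxG => h; have := leq_trans h cM.
  have : (B <= B')%O by rewrite /B' leUl.
  by rewrite -eAB -eA'' eM (negbTE nBG).
have := IH H' B' nH' B's.
rewrite -/M' eA'' => /(_ A'B' (leq_trans hd' dn)) hI.
rewrite (@monom_sub _ _ Gs H' M' (maxelts_sub H')) -(subnKC hd') exprD -/M'.
rewrite mulrACA.
exact: pIMr.
Qed.

End Main.

Unset Implicit Arguments.

Theorem theorem3p2 (disp : Order.disp_t) (L : finTBLatticeType disp)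
    (Gs : {set L}) :
  atomic (L := L) -> building_set Gs ->
  forall p : PR Gs, in_ideal (@gens_orig _ _ Gs) p <-> in_ideal (@gens_new _ _ Gs) p.
Proof.
move=> hat hbs p; split; apply: pItrans => q.
  case=> [[S [SG [nS ->]]]|[H [Ha ->]]].
    by apply: pIgen; left; exists S.
  apply: pIgen; right; exists set0, H.
  have m0 : maxelts (set0 : {set L}) = set0.
    by apply/eqP; rewrite -subset0; apply: maxelts_sub.
  have HG := atom_in_bs hbs Ha.
  have Hn0 := atom_ne0 Ha.
  have bH : (\bot < H)%O by rewrite lt_def Hn0 le0x.
  have d1 : dist (\bot : L)%O H = 1%N.
    apply/eqP; rewrite eqn_leq; apply/andP; split.
      have := @dist_le _ L \bot%O H [set H].
      rewrite cards1; apply.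
        by apply/subsetP => x; rewrite inE => /eqP ->.
      by rewrite big_set1 join0x.
    rewrite lt0n; apply/negP => /eqP d0.
    by move: (dist_eq0 hat (ltW bH) d0) => e; rewrite e ltxx in bH.
  split.
    split; first exact: sub0set.
    move=> T; rewrite subset0 => /eqP ->; rewrite cards0.
    by [].
  split => //.
  rewrite m0 big_set0; split => //.
  by rewrite d1 expr1 /monom big_set0 mul1r.
case=> [[S [SG [nS ->]]]|[Hs [B [nH [Bs hrest]]]]].
  by apply: pIgen; left; exists S.
move: hrest => /= [AB ->].
exact: (claim hat hbs nH Bs AB (leqnn _)).
Qed.
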